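(* Let $I\subseteq\mathbb R[x_1,\dots,x_n]$ be an ideal such that $\mathcal V_{\mathbb R}(I)$ has a convex-singular point. Then $I$ is not $\mathrm{TH}$-exact.
   Context: $\mathbb{R}[\mathbf x]_k$ denotes the polynomials of degree at most $k$. $\mathcal V_{\mathbb R}(I)=\{x\in\mathbb R^n: f(x)=0\ \forall f\in I\}$. A polynomial $h$ is $k$-sos modulo $I$ if there are $g_1,\dots,g_r\in\mathbb{R}[\mathbf x]_k$ with $h-\sum_i g_i^2\in I$. The $k$-th theta body is $\mathrm{TH}_k(I)=\{p\in\mathbb R^n: l(p)\ge 0$ for every $l\in\mathbb{R}[\mathbf x]_1$ that is $k$-sos modulo $I\}$. $I$ is $\mathrm{TH}_k$-exact if $\mathrm{TH}_k(I)=\operatorname{cl}(\operatorname{conv}(\mathcal V_{\mathbb R}(I)))$, and $\mathrm{TH}$-exact if it is $\mathrm{TH}_k$-exact for some $k$. For $p\in\mathcal V_{\mathbb R}(I)$, the tangent space $T_p(I)$ is the affine subspace through $p$ orthogonal to the linear span of the gradients $\nabla f(p)$ of all polynomials $f$ vanishing on $\mathcal V_{\mathbb R}(I)$. A point $p\in\mathcal V_{\mathbb R}(I)$ is convex-singular if it lies on the (relative) boundary of $\operatorname{conv}(\mathcal V_{\mathbb R}(I))$ and $T_p(I)$ intersects the relative interior of $\operatorname{conv}(\mathcal V_{\mathbb R}(I))$. *)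

(* Defs.v *)
From Stdlib Require Import Reals List Arith.
Import ListNotations.
Open Scope R_scope.

(* Points of R^n: functions nat -> R whose coordinates i >= n vanish. *)
Definition pt := nat -> R.
Definition InRn (n : nat) (x : pt) : Prop := forall i, (n <= i)%nat -> x i = 0.

Fixpoint sumR (l : list R) : R := match l with [] => 0 | a :: l' => a + sumR l' end.
Fixpoint sum_lt (n : nat) (f : nat -> R) : R :=
  match n with O => 0 | S m => sum_lt m f + f m end.

(* Monomials: exponent list [e_0; e_1; ...] for x_0^e_0 x_1^e_1 ... *)
Fixpoint mon_eval_from (e : list nat) (x : pt) (i : nat) : R :=
  match e with [] => 1 | a :: e' => x i ^ a * mon_eval_from e' x (S i) end.
Definition mon_eval (e : list nat) (x : pt) : R := mon_eval_from e x 0.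
Fixpoint mon_deg (e : list nat) : nat := match e with [] => O | a :: e' => (a + mon_deg e')%nat end.

Definition polyrep := list (R * list nat).
Definition prep_eval (p : polyrep) (x : pt) : R := sumR (map (fun m => fst m * mon_eval (snd m) x) p).
Definition prep_vars (n : nat) (p : polyrep) : Prop := Forall (fun m => (length (snd m) <= n)%nat) p.
Definition prep_deg_le (k : nat) (p : polyrep) : Prop := Forall (fun m => (mon_deg (snd m) <= k)%nat) p.

Fixpoint dec_at (j : nat) (e : list nat) : list nat :=
  match e, j with
  | [], _ => []
  | a :: e', O => pred a :: e'
  | a :: e', S j' => a :: dec_at j' e'
  end.
Definition mon_deriv (j : nat) (m : R * list nat) : R * list nat :=
  (fst m * INR (nth j (snd m) O), dec_at j (snd m)).
Definition prep_deriv (j : nat) (p : polyrep) : polyrep := map (mon_deriv j) p.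

Definition represents (n : nat) (p : polyrep) (f : pt -> R) : Prop :=
  prep_vars n p /\ forall x, f x = prep_eval p x.
Definition IsPoly (n : nat) (f : pt -> R) : Prop := exists p, represents n p f.
Definition IsPolyDeg (n k : nat) (f : pt -> R) : Prop :=
  exists p, represents n p f /\ prep_deg_le k p.

Definition IsIdeal (n : nat) (I : (pt -> R) -> Prop) : Prop :=
  (forall f, I f -> IsPoly n f) /\
  I (fun _ => 0) /\
  (forall f g, I f -> I g -> I (fun x => f x + g x)) /\
  (forall f h, I f -> IsPoly n h -> I (fun x => h x * f x)).

Definition VR (n : nat) (I : (pt -> R) -> Prop) (x : pt) : Prop :=
  InRn n x /\ forall f, I f -> f x = 0.

Definition ksos_mod (n k : nat) (I : (pt -> R) -> Prop) (h : pt -> R) : Prop :=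
  exists gs : list (pt -> R),
    Forall (IsPolyDeg n k) gs /\
    I (fun x => h x - sumR (map (fun g => g x ^ 2) gs)).

Definition TH (n k : nat) (I : (pt -> R) -> Prop) (p : pt) : Prop :=
  InRn n p /\ forall l, IsPolyDeg n 1 l -> ksos_mod n k I l -> 0 <= l p.

Definition comb (ws : list R) (xs : list pt) : pt :=
  fun i => sumR (map (fun wx => fst wx * snd wx i) (combine ws xs)).
Definition conv (S : pt -> Prop) (p : pt) : Prop :=
  exists (ws : list R) (xs : list pt),
    length ws = length xs /\ Forall (fun w => 0 <= w) ws /\ sumR ws = 1 /\
    Forall S xs /\ p = comb ws xs.
Definition aff (S : pt -> Prop) (p : pt) : Prop :=
  exists (ws : list R) (xs : list pt),
    length ws = length xs /\ sumR ws = 1 /\ Forall S xs /\ p = comb ws xs.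
Definition dist2 (n : nat) (p q : pt) : R := sum_lt n (fun i => (p i - q i) ^ 2).
Definition cl (n : nat) (S : pt -> Prop) (p : pt) : Prop :=
  InRn n p /\ forall eps, 0 < eps -> exists q, S q /\ dist2 n p q < eps.
Definition relint (n : nat) (S : pt -> Prop) (p : pt) : Prop :=
  S p /\ exists eps, 0 < eps /\ forall q, aff S q -> dist2 n p q < eps -> S q.
Definition relbd (n : nat) (S : pt -> Prop) (p : pt) : Prop :=
  cl n S p /\ ~ relint n S p.

Definition TH_k_exact (n k : nat) (I : (pt -> R) -> Prop) : Prop :=
  forall p, TH n k I p <-> cl n (conv (VR n I)) p.
Definition TH_exact (n : nat) (I : (pt -> R) -> Prop) : Prop :=
  exists k, TH_k_exact n k I.

(* tangent space T_p(I): p + (gradients of all polys vanishing on V_R(I))^perp *)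
Definition tangent (n : nat) (I : (pt -> R) -> Prop) (p q : pt) : Prop :=
  InRn n q /\
  forall f r, represents n r f -> (forall x, VR n I x -> f x = 0) ->
    sum_lt n (fun i => prep_eval (prep_deriv i r) p * (q i - p i)) = 0.

Definition convex_singular (n : nat) (I : (pt -> R) -> Prop) (p : pt) : Prop :=
  VR n I p /\ relbd n (conv (VR n I)) p /\
  exists q, tangent n I p q /\ relint n (conv (VR n I)) q.

(* Main.v *)
Require Import Defs.
From Stdlib Require Import Reals List Lra Lia Psatz Arith Classical FunctionalExtensionality.
Import ListNotations.
Open Scope R_scope.


Lemma sum_lt_ext N f g : (forall i, (i < N)%nat -> f i = g i) -> sum_lt N f = sum_lt N g.
Proof. induction N; intros H; simpl; auto. rewrite IHN by (intros; apply H; lia). rewrite H by lia. auto. Qed.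

Lemma sum_lt_plus N f g : sum_lt N (fun i => f i + g i) = sum_lt N f + sum_lt N g.
Proof. induction N; simpl; [lra|]. rewrite IHN; lra. Qed.

Lemma sum_lt_scal N c f : sum_lt N (fun i => c * f i) = c * sum_lt N f.
Proof. induction N; simpl; [lra|]. rewrite IHN; lra. Qed.

Lemma sum_lt_le N f g : (forall i, (i < N)%nat -> f i <= g i) -> sum_lt N f <= sum_lt N g.
Proof. induction N; intros H; simpl; [lra|]. pose proof (H N ltac:(lia)). pose proof (IHN ltac:(intros; apply H; lia)). lra. Qed.

Lemma sum_lt_shift N f : sum_lt (S N) f = f 0%nat + sum_lt N (fun i => f (S i)).
Proof. induction N; simpl in *; [lra|]. rewrite IHN. lra. Qed.

Lemma sum_lt_zero N : sum_lt N (fun _ => 0) = 0.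
Proof. induction N; simpl; [lra|]. rewrite IHN; lra. Qed.

Lemma sum_lt_tail N m f : (m <= N)%nat -> (forall i, (m <= i)%nat -> f i = 0) -> sum_lt N f = sum_lt m f.
Proof. intros Hle H. induction N.
 - assert (m = 0%nat) by lia. subst. auto.
 - destruct (Nat.eq_dec m (S N)). subst; auto. simpl. rewrite IHN by lia. rewrite H by lia. lra. Qed.

Lemma sum_lt_delta N j0 a f : (j0 < N)%nat ->
  sum_lt N (fun j => (if Nat.eqb j j0 then a else 0) * f j) = a * f j0.
Proof. induction N; intros H; [lia|]. simpl. destruct (Nat.eq_dec j0 N).
 - subst. rewrite Nat.eqb_refl. rewrite (sum_lt_ext _ _ (fun _ => 0)). rewrite sum_lt_zero. lra.
   intros i Hi. destruct (Nat.eqb_spec i N). lia. lra.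
 - rewrite IHN by lia. destruct (Nat.eqb_spec N j0). lia. lra. Qed.

Lemma sumR_app l1 l2 : sumR (l1 ++ l2) = sumR l1 + sumR l2.
Proof. induction l1; simpl; [lra|]. rewrite IHl1; lra. Qed.

Lemma sum_lt_seq N f : sumR (map f (seq 0 N)) = sum_lt N f.
Proof. induction N; [simpl; auto|]. rewrite seq_S, map_app, sumR_app. simpl. rewrite IHN. lra. Qed.

Lemma sumR_map_plus {A} (l : list A) f g : sumR (map (fun a => f a + g a) l) = sumR (map f l) + sumR (map g l).
Proof. induction l; simpl; [lra|]. rewrite IHl; lra. Qed.

Lemma sumR_map_scal {A} (l : list A) c f : sumR (map (fun a => c * f a) l) = c * sumR (map f l).
Proof. induction l; simpl; [lra|]. rewrite IHl; lra. Qed.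

Lemma sumR_map_ext {A} (l : list A) f g : (forall a, In a l -> f a = g a) -> sumR (map f l) = sumR (map g l).
Proof. induction l; intros H; simpl; auto. rewrite H by (left; auto). rewrite IHl; auto. intros; apply H; right; auto. Qed.

Lemma sumR_map_le {A} (l : list A) f g : (forall a, In a l -> f a <= g a) -> sumR (map f l) <= sumR (map g l).
Proof. induction l; intros H; simpl; [lra|]. pose proof (H a (or_introl eq_refl)). pose proof (IHl ltac:(intros; apply H; right; auto)). lra. Qed.

Lemma sumR_map_zero {A} (l : list A) : sumR (map (fun _ => 0) l) = 0.
Proof. induction l; simpl; [lra|]. rewrite IHl; lra. Qed.

Lemma sumR_abs {A} (l : list A) f : Rabs (sumR (map f l)) <= sumR (map (fun a => Rabs (f a)) l).
Proof. induction l; simpl. rewrite Rabs_R0; lra. eapply Rle_trans. apply Rabs_triang. lra. Qed.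

Lemma exch {A} N (L : list (R * A)) (c : nat -> R) (F : nat -> A -> R) :
  sum_lt N (fun j => c j * sumR (map (fun wx => fst wx * F j (snd wx)) L)) =
  sumR (map (fun wx => fst wx * sum_lt N (fun j => c j * F j (snd wx))) L).
Proof. induction L as [|[w x] L IH]; simpl.
 - rewrite (sum_lt_ext _ _ (fun _ => 0)) by (intros; lra). apply sum_lt_zero.
 - rewrite <- IH. rewrite <- sum_lt_scal. rewrite <- sum_lt_plus. apply sum_lt_ext. intros; simpl; ring. Qed.


Lemma LA (X : Type) (Vp : X -> Prop) N : forall (u : nat -> X -> R) (phi : nat -> R),
 (forall c, (forall x, Vp x -> sum_lt N (fun j => c j * u j x) = 0) -> sum_lt N (fun j => phi j * c j) = 0) ->
 exists wxs : list (R * X), Forall (fun wx => Vp (snd wx)) wxs /\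
   forall j, (j < N)%nat -> phi j = sumR (map (fun wx => fst wx * u j (snd wx)) wxs).
Proof.
 induction N as [|N IH]; intros u phi H.
 - exists []. split; auto. intros; lia.
 - destruct (classic (exists x0, Vp x0 /\ u N x0 <> 0)) as [[x0 [Hx0 Ha]]|Hno].
   + remember (u N x0) as a eqn:Ea.
     set (u' := fun j x => u j x - (u N x / a) * u j x0).
     set (phi' := fun j => phi j - (phi N / a) * u j x0).
     destruct (IH u' phi') as [wxs [HF Hphi]].
     { intros c Hc.
       set (S0 := sum_lt N (fun j => c j * u j x0)).
       set (c2 := fun j => if Nat.eqb j N then - S0 / a else c j).
       assert (E1 : forall f, sum_lt N (fun j => f j * c2 j) = sum_lt N (fun j => f j * c j)).
       { intros f. apply sum_lt_ext. intros i Hi. unfold c2. destruct (Nat.eqb_spec i N); [lia|auto]. }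
       assert (E2 : forall f, sum_lt N (fun j => c2 j * f j) = sum_lt N (fun j => c j * f j)).
       { intros f. apply sum_lt_ext. intros i Hi. unfold c2. destruct (Nat.eqb_spec i N); [lia|auto]. }
       assert (Hc2 : c2 N = - S0 / a) by (unfold c2; rewrite Nat.eqb_refl; auto).
       pose proof (H c2) as H2. simpl in H2. rewrite E1, Hc2 in H2.
       assert (H3 : sum_lt N (fun j => phi j * c j) + phi N * (- S0 / a) = 0).
       { apply H2. intros x Hx. rewrite E2. specialize (Hc x Hx). unfold u' in Hc.
         rewrite (sum_lt_ext _ _ (fun j => c j * u j x + (- (u N x / a)) * (c j * u j x0))) in Hc
           by (intros; ring).
         rewrite sum_lt_plus, sum_lt_scal in Hc. fold S0 in Hc. field_simplify; [|auto].
         field_simplify in Hc; [|auto]. lra. }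
       unfold phi'.
       rewrite (sum_lt_ext _ _ (fun j => phi j * c j + (- (phi N / a)) * (c j * u j x0))) by (intros; ring).
       rewrite sum_lt_plus, sum_lt_scal. fold S0. field_simplify; [|auto]. field_simplify in H3; [|auto]. lra. }
     exists ((phi N / a - sumR (map (fun wx => fst wx * u N (snd wx)) wxs) / a, x0) :: wxs).
     split. constructor; auto.
     intros j Hj. simpl. destruct (Nat.eq_dec j N).
     * subst j. rewrite <- Ea. field. auto.
     * rewrite (sumR_map_ext _ (fun wx => fst wx * u j (snd wx)) (fun wx => fst wx * u' j (snd wx) + (u j x0 / a) * (fst wx * u N (snd wx)))).
       2:{ intros. unfold u'. field. auto. }
       rewrite sumR_map_plus, sumR_map_scal. rewrite <- (Hphi j) by lia. unfold phi'. field. auto.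
   + assert (Hz : forall x, Vp x -> u N x = 0).
     { intros x Hx. apply NNPP. intro. apply Hno. eauto. }
     assert (HphiN : phi N = 0).
     { set (c := fun j => if Nat.eqb j N then 1 else 0).
       pose proof (H c) as H2. simpl in H2.
       rewrite (sum_lt_ext _ (fun j => phi j * c j) (fun _ => 0)) in H2.
       2:{ intros i Hi. unfold c. destruct (Nat.eqb_spec i N); [lia|ring]. }
       rewrite sum_lt_zero in H2. unfold c in H2. rewrite Nat.eqb_refl in H2.
       assert (0 + phi N * 1 = 0). apply H2. intros x Hx.
       rewrite (sum_lt_ext _ _ (fun _ => 0)). rewrite sum_lt_zero. rewrite Hz; auto; ring.
       intros i Hi. unfold c. destruct (Nat.eqb_spec i N); [lia|ring]. lra. }
     destruct (IH u phi) as [wxs [HF Hphi]].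
     { intros c Hc. pose proof (H c) as H2. simpl in H2. rewrite HphiN in H2.
       assert (sum_lt N (fun j => phi j * c j) + 0 * c N = 0); [|lra].
       apply H2. intros x Hx. rewrite Hc, Hz; auto. ring. }
     exists wxs. split; auto. intros j Hj. destruct (Nat.eq_dec j N).
     * subst. rewrite HphiN. rewrite (sumR_map_ext _ _ (fun _ => 0)). rewrite sumR_map_zero; auto.
       intros wx Hin. rewrite Forall_forall in HF. rewrite Hz; auto. ring.
     * apply Hphi. lia.
Qed.


Definition line (p v : pt) (s : R) : pt := fun i => p i + s * v i.
Definition HasD (p v : pt) (F : pt -> R) (d : R) : Prop :=
  derivable_pt_lim (fun s => F (line p v s)) 0 d.

Lemma line0 p v : line p v 0 = p.
Proof. apply functional_extensionality; intros; unfold line; ring. Qed.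

Lemma HasD_ext p v F G d : (forall x, F x = G x) -> HasD p v F d -> HasD p v G d.
Proof. intros H. replace G with F; auto. apply functional_extensionality; auto. Qed.

Lemma HasD_uniq p v F d1 d2 : HasD p v F d1 -> HasD p v F d2 -> d1 = d2.
Proof. apply uniqueness_limite. Qed.

Lemma HasD_const p v c : HasD p v (fun _ => c) 0.
Proof. apply derivable_pt_lim_const. Qed.

Lemma HasD_plus p v F G a b : HasD p v F a -> HasD p v G b -> HasD p v (fun x => F x + G x) (a + b).
Proof. intros H1 H2. exact (derivable_pt_lim_plus _ _ _ _ _ H1 H2). Qed.

Lemma HasD_minus p v F G a b : HasD p v F a -> HasD p v G b -> HasD p v (fun x => F x - G x) (a - b).
Proof. intros H1 H2. exact (derivable_pt_lim_minus _ _ _ _ _ H1 H2). Qed.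

Lemma HasD_mult p v F G a b : HasD p v F a -> HasD p v G b ->
  HasD p v (fun x => F x * G x) (a * G p + F p * b).
Proof. intros H1 H2. pose proof (derivable_pt_lim_mult _ _ _ _ _ H1 H2) as H.
 cbv beta in H. rewrite line0 in H. exact H. Qed.

Lemma HasD_scal p v c F a : HasD p v F a -> HasD p v (fun x => c * F x) (c * a).
Proof. intros H. pose proof (HasD_mult p v (fun _ => c) F 0 a (HasD_const p v c) H) as H2.
 replace (c * a) with (0 * F p + c * a) by ring. exact H2. Qed.

Lemma HasD_sq p v F a : HasD p v F a -> HasD p v (fun x => F x ^ 2) (2 * F p * a).
Proof. intros H. pose proof (HasD_mult p v F F a a H H) as H2.
 replace (2 * F p * a) with (a * F p + F p * a) by ring.
 eapply HasD_ext; [|exact H2]. intros; simpl; ring. Qed.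

Lemma HasD_affine p v F A B : (forall s, F (line p v s) = A + s * B) -> HasD p v F B.
Proof. intros H. unfold HasD.
 replace (fun s => F (line p v s)) with (fun s => A + s * B) by (apply functional_extensionality; intros; auto).
 assert (H1 : derivable_pt_lim (fun s => s * B) 0 B).
 { replace (fun s => s * B) with (mult_real_fct B id).
   2:{ apply functional_extensionality; intros; unfold mult_real_fct, id; ring. }
   replace B with (B * 1) at 2 by ring. apply derivable_pt_lim_scal. apply derivable_pt_lim_id. }
 pose proof (derivable_pt_lim_plus (fun _ => A) (fun s => s * B) 0 0 B (derivable_pt_lim_const A 0) H1) as H2.
 rewrite Rplus_0_l in H2. exact H2. Qed.

Lemma HasD_coord p v j a : HasD p v (fun x => x j ^ a) (INR a * p j ^ pred a * v j).
Proof. unfold HasD.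
 pose proof (derivable_pt_lim_comp (fun s => p j + s * v j) (fun y => y ^ a) 0 (v j) (INR a * (p j + 0 * v j) ^ pred a)) as H.
 replace (p j + 0 * v j) with (p j) in H by ring.
 apply H.
 - apply HasD_affine with (A := p j) (F := fun x => x j). intros; unfold line; ring.
 - replace (p j + 0 * v j) with (p j) by ring. apply derivable_pt_lim_pow.
Qed.


Lemma monD p v e : forall j, HasD p v (fun x => mon_eval_from e x j)
  (sum_lt (length e) (fun i => INR (nth i e 0%nat) * mon_eval_from (dec_at i e) p j * v (j + i)%nat)).
Proof.
 induction e as [|a e IH]; intros j.
 - simpl. apply HasD_const.
 - pose proof (HasD_mult p v _ _ _ _ (HasD_coord p v j a) (IH (S j))) as H.
   change (length (a::e)) with (S (length e)). rewrite sum_lt_shift.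
   rewrite (sum_lt_ext _ _ (fun i => p j ^ a * (INR (nth i e 0%nat) * mon_eval_from (dec_at i e) p (S j) * v (S j + i)%nat))).
   2:{ intros i Hi. simpl. replace (j + S i)%nat with (S j + i)%nat by lia. simpl. replace (S (j + i)) with (S j + i)%nat by lia. ring. }
   rewrite sum_lt_scal. replace (j + 0)%nat with j by lia.
   cbv beta in H. replace (INR (nth 0 (a :: e) 0%nat) * mon_eval_from (dec_at 0 (a :: e)) p j * v j) with (INR a * p j ^ Init.Nat.pred a * v j * mon_eval_from e p (S j)) by (simpl; ring).
   eapply HasD_ext; [|exact H]. intros x. simpl. auto.
Qed.

Lemma monD0 p v n e : (length e <= n)%nat -> HasD p v (mon_eval e)
  (sum_lt n (fun i => INR (nth i e 0%nat) * mon_eval (dec_at i e) p * v i)).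
Proof. intros Hl. rewrite (sum_lt_tail n (length e)); auto.
 - eapply HasD_ext; [|apply (monD p v e 0)]. intros; reflexivity.
 - intros i Hi. rewrite nth_overflow by lia. simpl. ring. Qed.

Lemma repD p v n r : prep_vars n r ->
  HasD p v (prep_eval r) (sum_lt n (fun i => prep_eval (prep_deriv i r) p * v i)).
Proof.
 induction r as [|[c e] r IH]; intros Hv.
 - unfold prep_eval, prep_deriv. simpl. rewrite (sum_lt_ext _ _ (fun _ => 0)) by (intros; ring).
   rewrite sum_lt_zero. apply HasD_const.
 - inversion Hv; subst. simpl in H1.
   pose proof (HasD_plus p v _ _ _ _ (HasD_scal p v c _ _ (monD0 p v n e H1)) (IH H2)) as H.
   rewrite <- sum_lt_scal, <- sum_lt_plus in H.
   unfold prep_eval, prep_deriv in *. simpl.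
   erewrite sum_lt_ext. eapply HasD_ext; [|exact H]. intros; simpl; reflexivity.
   intros i Hi. simpl. unfold mon_deriv. simpl. ring.
Qed.


Fixpoint allexps (k n : nat) : list (list nat) :=
  match n with O => [[]] | S n' => flat_map (fun a => map (cons a) (allexps k n')) (seq 0 (S k)) end.

Lemma allexps_len k n m : In m (allexps k n) -> length m = n.
Proof. revert m; induction n; intros m H.
 - simpl in H; destruct H as [H|[]]; subst; auto.
 - apply in_flat_map in H. destruct H as [a [_ H]]. apply in_map_iff in H. destruct H as [m' [<- H]].
   simpl. rewrite IHn; auto. Qed.

Lemma allexps_cover k n : forall e, (length e <= n)%nat -> (mon_deg e <= k)%nat ->
  exists m, In m (allexps k n) /\ forall x j, mon_eval_from e x j = mon_eval_from m x j.
Proof. induction n; intros e Hl Hd.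
 - destruct e; simpl in Hl; [|lia]. exists []. simpl; auto.
 - destruct e as [|a e].
   + destruct (IHn [] ltac:(simpl; lia) Hd) as [m [Hm He]]. exists (0%nat :: m). split.
     * apply in_flat_map. exists 0%nat. split. apply in_seq. lia. apply in_map. auto.
     * intros x j. simpl. rewrite <- He. simpl. ring.
   + simpl in Hl, Hd. destruct (IHn e ltac:(lia) ltac:(lia)) as [m [Hm He]]. exists (a :: m). split.
     * apply in_flat_map. exists a. split. apply in_seq. lia. apply in_map. auto.
     * intros x j. simpl. rewrite He. auto.
Qed.

Definition uu (k n j : nat) (x : pt) : R := mon_eval (nth j (allexps k n) []) x.
Definition DD (k n : nat) (p v : pt) (j : nat) : R :=
  sum_lt n (fun i => prep_eval (prep_deriv i [(1, nth j (allexps k n) [])]) p * v i).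

Lemma nth_len k n j : (length (nth j (allexps k n) []) <= n)%nat.
Proof. destruct (nth_in_or_default j (allexps k n) []) as [H|H].
 - rewrite (allexps_len k n _ H); lia.
 - rewrite H; simpl; lia. Qed.

Lemma HasD_u k n p v j : HasD p v (uu k n j) (DD k n p v j).
Proof. eapply HasD_ext; [|apply repD]. intros x. unfold prep_eval, uu. simpl. ring.
 constructor; [apply nth_len|constructor]. Qed.

Lemma HasD_coeffs k n p v c N : HasD p v (fun x => sum_lt N (fun j => c j * uu k n j x)) (sum_lt N (fun j => c j * DD k n p v j)).
Proof. induction N; simpl. apply HasD_const. apply HasD_plus; auto. apply HasD_scal. apply HasD_u. Qed.

Lemma coeffs_of_rep k n r : prep_vars n r -> prep_deg_le k r ->
  exists c, forall x, prep_eval r x = sum_lt (length (allexps k n)) (fun j => c j * uu k n j x).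
Proof. induction r as [|[a e] r IH]; intros Hv Hd.
 - exists (fun _ => 0). intros x. unfold prep_eval; simpl. rewrite (sum_lt_ext _ _ (fun _ => 0)) by (intros; ring). rewrite sum_lt_zero; auto.
 - inversion Hv; inversion Hd; subst. simpl in *.
   destruct (IH H2 H6) as [c Hc]. destruct (allexps_cover k n e H1 H5) as [m [Hm He]].
   destruct (In_nth _ _ [] Hm) as [j0 [Hj0 Hnth]].
   exists (fun j => (if Nat.eqb j j0 then a else 0) + c j). intros x.
   rewrite (sum_lt_ext _ _ (fun j => (if Nat.eqb j j0 then a else 0) * uu k n j x + c j * uu k n j x)) by (intros; ring).
   rewrite sum_lt_plus, sum_lt_delta by auto. rewrite <- Hc. unfold prep_eval; simpl.
   unfold uu, mon_eval. rewrite Hnth, He. auto.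
Qed.

Lemma rep_coeffs k n c : represents n (map (fun j => (c j, nth j (allexps k n) [])) (seq 0 (length (allexps k n))))
   (fun x => sum_lt (length (allexps k n)) (fun j => c j * uu k n j x)).
Proof. split.
 - apply Forall_forall. intros m Hm. apply in_map_iff in Hm. destruct Hm as [j [<- _]]. simpl. apply nth_len.
 - intros x. unfold prep_eval. rewrite map_map. simpl. rewrite sum_lt_seq. reflexivity.
Qed.


Lemma mon_deg0 e : mon_deg e = 0%nat -> forall x j, mon_eval_from e x j = 1.
Proof. induction e; intros H x j; simpl in *; auto. assert (a = 0%nat) by lia. subst. simpl. rewrite IHe by lia. ring. Qed.

Lemma sumR_combine_fst ws (xs : list pt) : length ws = length xs ->
  sumR (map (fun wx => fst wx * 1) (combine ws xs)) = sumR ws.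
Proof. revert xs; induction ws; intros [|x xs] H; simpl in *; try lia; auto. rewrite IHws by lia. ring. Qed.

Lemma aff_mon e ws xs : (mon_deg e <= 1)%nat -> length ws = length xs -> sumR ws = 1 ->
  forall j, mon_eval_from e (comb ws xs) j = sumR (map (fun wx => fst wx * mon_eval_from e (snd wx) j) (combine ws xs)).
Proof. induction e as [|a e IH]; intros Hd Hl Hs j; simpl in *.
 - rewrite sumR_combine_fst; auto.
 - destruct a as [|[|a]]; [| |lia].
   + simpl. rewrite IH by (auto; lia). rewrite Rmult_1_l. apply sumR_map_ext. intros; ring.
   + assert (H0 : mon_deg e = 0%nat) by lia. rewrite (mon_deg0 e H0).
     rewrite (sumR_map_ext _ _ (fun wx => fst wx * snd wx j)).
     unfold comb. ring. intros wx _. rewrite (mon_deg0 e H0). rewrite pow_1, Rmult_1_r. reflexivity.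
Qed.

Lemma aff_rep r ws xs : prep_deg_le 1 r -> length ws = length xs -> sumR ws = 1 ->
  prep_eval r (comb ws xs) = sumR (map (fun wx => fst wx * prep_eval r (snd wx)) (combine ws xs)).
Proof. induction r as [|[c e] r IH]; intros Hd Hl Hs; unfold prep_eval in *; simpl.
 - rewrite (sumR_map_ext _ _ (fun _ => 0)) by (intros; ring). rewrite sumR_map_zero; auto.
 - inversion Hd; subst. rewrite IH by auto. unfold mon_eval. rewrite aff_mon by auto.
   rewrite (sumR_map_ext _ (fun wx => fst wx * (c * mon_eval_from e (snd wx) 0 + _))
     (fun wx => c * (fst wx * mon_eval_from e (snd wx) 0) + fst wx * sumR (map (fun m => fst m * mon_eval_from (snd m) (snd wx) 0) r))) by (intros; ring).
   rewrite sumR_map_plus, sumR_map_scal. auto.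
Qed.

Lemma aff_poly n l ws xs : IsPolyDeg n 1 l -> length ws = length xs -> sumR ws = 1 ->
  l (comb ws xs) = sumR (map (fun wx => fst wx * l (snd wx)) (combine ws xs)).
Proof. intros [r [[_ Hr] Hd]] Hl Hs. rewrite Hr, aff_rep by auto. apply sumR_map_ext. intros; rewrite Hr; auto. Qed.

Lemma aff_poly2 n l a b x y : IsPolyDeg n 1 l -> a + b = 1 -> l (comb [a; b] [x; y]) = a * l x + b * l y.
Proof. intros H Hs. rewrite (aff_poly n) by (simpl; auto; lra). simpl. ring. Qed.

Lemma comb_pt ws xs i : comb ws xs i = sumR (map (fun wx => fst wx * snd wx i) (combine ws xs)).
Proof. reflexivity. Qed.

Lemma comb_scale a ws (xs : list pt) i :
  sumR (map (fun wx => fst wx * snd wx i) (combine (map (Rmult a) ws) xs)) = a * comb ws xs i.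
Proof. revert xs; induction ws; intros [|x xs]; unfold comb; simpl; try ring. rewrite IHws. unfold comb. ring. Qed.

Lemma combine_app {A B} (l1 l2 : list A) (m1 m2 : list B) : length l1 = length m1 ->
  combine (l1 ++ l2) (m1 ++ m2) = combine l1 m1 ++ combine l2 m2.
Proof. revert m1; induction l1; intros [|b m1] H; simpl in *; try lia; auto. rewrite IHl1 by lia; auto. Qed.

Lemma comb2 a b ws xs ws' xs' : length ws = length xs ->
  comb [a; b] [comb ws xs; comb ws' xs'] = comb (map (Rmult a) ws ++ map (Rmult b) ws') (xs ++ xs').
Proof. intros Hl. apply functional_extensionality. intros i. unfold comb at 1. simpl.
 rewrite (comb_pt (_ ++ _)). rewrite combine_app by (rewrite length_map; auto). rewrite map_app, sumR_app.
 rewrite !comb_scale. ring. Qed.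

Lemma sumR_map_Rmult a ws : sumR (map (Rmult a) ws) = a * sumR ws.
Proof. induction ws; simpl; [ring|]. rewrite IHws; ring. Qed.

Lemma conv_pt (S : pt -> Prop) x : S x -> conv S x.
Proof. intros H. exists [1], [x]. split; [auto|]. split; [constructor; auto; lra|].
 split; [simpl; lra|]. split; [constructor; auto|].
 apply functional_extensionality. intros i. unfold comb; simpl. ring. Qed.

Lemma conv_aff S x : conv S x -> aff S x.
Proof. intros [ws [xs [H1 [_ [H3 [H4 H5]]]]]]. exists ws, xs. auto. Qed.

Lemma conv2 S a b x y : conv S x -> conv S y -> 0 <= a -> 0 <= b -> a + b = 1 -> conv S (comb [a; b] [x; y]).
Proof. intros [ws [xs [H1 [H2 [H3 [H4 H5]]]]]] [ws' [xs' [H1' [H2' [H3' [H4' H5']]]]]] Ha Hb Hab.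
 subst. rewrite comb2 by auto. exists (map (Rmult a) ws ++ map (Rmult b) ws'), (xs ++ xs'). repeat split.
 - rewrite !length_app, !length_map. lia.
 - apply Forall_app. split; apply Forall_map; eapply Forall_impl; try eassumption; intros; simpl; nra.
 - rewrite sumR_app, !sumR_map_Rmult, H3, H3'. lra.
 - apply Forall_app; auto. Qed.

Lemma aff2 S a b x y : aff S x -> aff S y -> a + b = 1 -> aff S (comb [a; b] [x; y]).
Proof. intros [ws [xs [H1 [H3 [H4 H5]]]]] [ws' [xs' [H1' [H3' [H4' H5']]]]] Hab.
 subst. rewrite comb2 by auto. exists (map (Rmult a) ws ++ map (Rmult b) ws'), (xs ++ xs'). repeat split.
 - rewrite !length_app, !length_map. lia.
 - rewrite sumR_app, !sumR_map_Rmult, H3, H3'. lra.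
 - apply Forall_app; auto. Qed.

Lemma conv_nonneg n (S : pt -> Prop) l x : IsPolyDeg n 1 l -> (forall y, S y -> 0 <= l y) -> conv S x -> 0 <= l x.
Proof. intros Hl HS [ws [xs [H1 [H2 [H3 [H4 H5]]]]]]. subst. rewrite (aff_poly n) by auto.
 clear H3. revert xs H1 H4; induction ws as [|w ws IH]; intros [|y xs] H1 H4; simpl in *; try lra.
 inversion H2 as [|? ? Hw Hws]; inversion H4 as [|? ? Hy Hxs]; subst. pose proof (HS y Hy). pose proof (IH Hws xs ltac:(lia) Hxs). nra. Qed.


Ltac gen_pt := repeat match goal with | |- context [?f ?i] => match type of f with pt =>
   let t := fresh "t" in set (t := f i); clearbody t end end.

Lemma sq_bound A B a k : 0 <= a <= 1 -> 0 < k -> ((A - a * B) / k) ^ 2 <= 2 / k ^ 2 * A ^ 2 + 2 / k ^ 2 * B ^ 2.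
Proof. intros Ha Hk.
 assert (H0 : a * a <= 1) by nra.
 assert (H1 : (A - a * B) ^ 2 <= 2 * A ^ 2 + 2 * B ^ 2).
 { assert (0 <= (A + a * B) ^ 2) by apply pow2_ge_0. assert (0 <= (1 - a * a) * (B * B)) by (apply Rmult_le_pos; nra). simpl in *. nra. }
 replace (((A - a * B) / k) ^ 2) with ((A - a * B) ^ 2 / k ^ 2) by (field; lra).
 replace (2 / k ^ 2 * A ^ 2 + 2 / k ^ 2 * B ^ 2) with ((2 * A ^ 2 + 2 * B ^ 2) / k ^ 2) by (field; lra).
 apply Rmult_le_compat_r; auto. left. apply Rinv_0_lt_compat. nra. Qed.

Lemma seg n V0 x q p alpha : cl n (conv V0) x -> relint n (conv V0) q -> conv V0 p -> 0 < alpha < 1 ->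
  (forall i, p i = alpha * x i + (1 - alpha) * q i) -> relint n (conv V0) p.
Proof.
 intros [_ Hcl] [Cq [d [Hd Hball]]] Cp Ha Hp. split; auto.
 set (k := 1 - alpha). assert (Hk : 0 < k) by (unfold k; lra).
 assert (Hk2 : 0 < k ^ 2) by (apply pow_lt; auto).
 exists (d * k ^ 2 / 4). split. { apply Rmult_lt_0_compat; [|lra]. nra. }
 intros y Hy Hdy.
 destruct (Hcl (d * k ^ 2 / 4) ltac:(apply Rmult_lt_0_compat; [apply Rmult_lt_0_compat; auto|lra])) as [x' [Cx' Hdx']].
 set (z := comb [1 / k; - alpha / k] [y; x']).
 assert (Az : aff (conv V0) z). { apply aff2; auto. apply conv_aff, conv_pt; auto. unfold k. field. lra. }
 assert (Dz : dist2 n q z < d).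
 { unfold dist2 in *.
   eapply Rle_lt_trans.
   - apply (sum_lt_le _ _ (fun i => 2 / k ^ 2 * (p i - y i) ^ 2 + 2 / k ^ 2 * (x i - x' i) ^ 2)).
     intros i _. replace (q i - z i) with (((p i - y i) - alpha * (x i - x' i)) / k).
     apply sq_bound; lra. unfold z, comb; simpl. rewrite Hp. unfold k. gen_pt. field. lra.
   - rewrite sum_lt_plus, !sum_lt_scal.
     apply Rlt_le_trans with (2 / k ^ 2 * (d * k ^ 2 / 4) + 2 / k ^ 2 * (d * k ^ 2 / 4)).
     assert (0 < 2 / k ^ 2) by (apply Rdiv_lt_0_compat; lra). apply Rplus_lt_le_compat. apply Rmult_lt_compat_l; auto. left; apply Rmult_lt_compat_l; auto.
     right. field. lra. }
 assert (Cz : conv V0 z) by auto.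
 replace y with (comb [alpha; k] [x'; z]). apply conv2; auto; unfold k; lra.
 apply functional_extensionality. intros i. unfold z, comb; simpl. gen_pt. field. lra.
Qed.

Lemma bound_pt n V0 q x : relint n (conv V0) q -> V0 x -> exists c, 0 <= c /\
  forall l, IsPolyDeg n 1 l -> (forall y, V0 y -> 0 <= l y) -> l x <= c * l q.
Proof.
 intros [Cq [d [Hd Hball]]] Vx.
 assert (HD : 0 <= dist2 n q x). { unfold dist2. rewrite <- (sum_lt_zero n). apply sum_lt_le. intros; apply pow2_ge_0. }
 remember (dist2 n q x) as D eqn:HDe.
 remember (d / (d + D + 1)) as s eqn:Hse.
 assert (Hs : 0 < s) by (rewrite Hse; apply Rdiv_lt_0_compat; lra).
 assert (Hs1 : s * (d + D + 1) = d) by (rewrite Hse; field; lra).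
 exists ((1 + s) / s). split. { left. apply Rdiv_lt_0_compat; lra. }
 intros l Hl Hpos.
 remember (comb [1 + s; - s] [q; x]) as z eqn:Hz.
 assert (Cz : conv V0 z).
 { apply Hball. rewrite Hz. apply aff2. apply conv_aff, conv_pt; auto. apply conv_aff, conv_pt, conv_pt; auto. ring.
   unfold dist2. rewrite (sum_lt_ext _ _ (fun i => s ^ 2 * (q i - x i) ^ 2)).
   rewrite sum_lt_scal. fold (dist2 n q x). rewrite <- HDe.
   assert (s < 1). { apply (Rmult_lt_reg_r (d + D + 1)); lra. }
   assert (s * D < d) by nra. nra.
   intros i _. rewrite Hz. unfold comb; simpl. gen_pt. ring. }
 pose proof (conv_nonneg n V0 l z Hl Hpos Cz) as H.
 rewrite Hz in H. rewrite (aff_poly2 n) in H by (auto; ring).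
 apply (Rmult_le_reg_l s); auto. replace (s * ((1 + s) / s * l q)) with ((1 + s) * l q) by (field; lra). lra.
Qed.

Lemma bound_list n V0 q (xs : list (R * pt)) : relint n (conv V0) q -> Forall (fun wx => V0 (snd wx)) xs ->
  exists c, 0 <= c /\ forall l, IsPolyDeg n 1 l -> (forall y, V0 y -> 0 <= l y) ->
   Forall (fun wx => l (snd wx) <= c * l q) xs.
Proof.
 intros Hq. induction xs as [|[w x] xs IH]; intros HF.
 - exists 0. split. lra. auto.
 - inversion HF as [|? ? Hx Hxs]; subst. destruct (IH Hxs) as [c [Hc H]].
   destruct (bound_pt n V0 q x Hq Hx) as [c1 [Hc1 H1]].
   exists (Rmax c c1). split. { eapply Rle_trans; [apply Hc|apply Rmax_l]. }
   intros l Hl Hpos.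
   assert (Hlq : 0 <= l q) by (apply (conv_nonneg n V0); auto; apply Hq).
   constructor.
   + simpl. eapply Rle_trans. apply (H1 l Hl Hpos). apply Rmult_le_compat_r; auto. apply Rmax_r.
   + eapply Forall_impl; [|apply (H l Hl Hpos)]. intros wx Hwx. simpl in *. eapply Rle_trans; [apply Hwx|].
     apply Rmult_le_compat_r; auto. apply Rmax_l.
Qed.


Lemma gD n k p v (wxs : list (R * pt)) :
  (forall j, (j < length (allexps k n))%nat -> DD k n p v j = sumR (map (fun wx => fst wx * uu k n j (snd wx)) wxs)) ->
  forall g, IsPolyDeg n k g -> HasD p v g (sumR (map (fun wx => fst wx * g (snd wx)) wxs)).
Proof.
 intros Hphi g [r [[Hv Hr] Hd]].
 destruct (coeffs_of_rep k n r Hv Hd) as [c Hc].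
 pose proof (HasD_coeffs k n p v c (length (allexps k n))) as H.
 rewrite (sum_lt_ext _ _ (fun j => c j * sumR (map (fun wx => fst wx * uu k n j (snd wx)) wxs))) in H
   by (intros; rewrite Hphi; auto).
 rewrite exch in H.
 rewrite (sumR_map_ext _ _ (fun wx => fst wx * g (snd wx))) in H by (intros; rewrite Hr, Hc; auto).
 eapply HasD_ext; [|exact H]. intros x; simpl. rewrite Hr, Hc. auto.
Qed.

Definition Bnd (eps : R) (p : pt) (wxs : list (R * pt)) (h : pt -> R) : R :=
  sumR (map (fun wx => Rabs (fst wx) * (eps * h p + h (snd wx) / eps)) wxs).

Lemma Bnd_plus eps p wxs F G : Bnd eps p wxs (fun x => F x + G x) = Bnd eps p wxs F + Bnd eps p wxs G.
Proof. unfold Bnd. rewrite <- sumR_map_plus. apply sumR_map_ext. intros. unfold Rdiv. ring. Qed.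

Lemma two_ab eps a b : 0 < eps -> 2 * Rabs (a * b) <= eps * a ^ 2 + b ^ 2 / eps.
Proof. intros He. rewrite Rabs_mult.
 assert (H1 : 2 * eps * (Rabs a * Rabs b) <= eps ^ 2 * a ^ 2 + b ^ 2).
 { assert (0 <= (eps * Rabs a - Rabs b) ^ 2) by apply pow2_ge_0.
   rewrite <- (pow2_abs a), <- (pow2_abs b). nra. }
 apply (Rmult_le_reg_l eps); auto.
 replace (eps * (eps * a ^ 2 + b ^ 2 / eps)) with (eps ^ 2 * a ^ 2 + b ^ 2) by (field; lra). lra. Qed.

Lemma sq_term eps p (wxs : list (R * pt)) (g : pt -> R) : 0 < eps ->
  Rabs (2 * g p * sumR (map (fun wx => fst wx * g (snd wx)) wxs)) <= Bnd eps p wxs (fun x => g x ^ 2).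
Proof. intros He. unfold Bnd. rewrite <- sumR_map_scal.
 eapply Rle_trans. apply sumR_abs. apply sumR_map_le. intros wx _.
 replace (2 * g p * (fst wx * g (snd wx))) with (fst wx * (2 * (g p * g (snd wx)))) by ring.
 rewrite Rabs_mult, Rabs_mult, (Rabs_right 2) by lra.
 apply Rmult_le_compat_l. apply Rabs_pos. apply two_ab; auto. Qed.

Lemma sumsqD n k p v wxs eps gs : 0 < eps ->
  (forall j, (j < length (allexps k n))%nat -> DD k n p v j = sumR (map (fun wx => fst wx * uu k n j (snd wx)) wxs)) ->
  Forall (IsPolyDeg n k) gs ->
  exists d, HasD p v (fun x => sumR (map (fun g => g x ^ 2) gs)) d /\
     Rabs d <= Bnd eps p wxs (fun x => sumR (map (fun g => g x ^ 2) gs)).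
Proof. intros He Hphi. induction gs as [|g gs IH]; intros HF.
 - exists 0. split. simpl. apply HasD_const. rewrite Rabs_R0. unfold Bnd. simpl.
   rewrite (sumR_map_ext _ _ (fun _ => 0)). rewrite sumR_map_zero; lra. intros; unfold Rdiv; ring.
 - inversion HF as [|? ? Hg Hgs]; subst. destruct (IH Hgs) as [d [Hd Hb]].
   pose proof (HasD_sq p v g _ (gD n k p v wxs Hphi g Hg)) as H1.
   exists (2 * g p * sumR (map (fun wx => fst wx * g (snd wx)) wxs) + d). split.
   + cbn [map sumR]. apply HasD_plus; auto.
   + cbn [map sumR]. rewrite (Bnd_plus eps p wxs (fun x => g x ^ 2) (fun x => sumR (map (fun g => g x ^ 2) gs))).
     eapply Rle_trans. apply Rabs_triang. pose proof (sq_term eps p wxs g He). lra.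
Qed.

Lemma Bnd_bound eps p (wxs : list (R * pt)) h B : 0 < eps -> Forall (fun wx => h (snd wx) <= B) wxs ->
  Bnd eps p wxs h <= eps * sumR (map (fun wx => Rabs (fst wx)) wxs) * h p + sumR (map (fun wx => Rabs (fst wx)) wxs) * B / eps.
Proof. intros He. induction wxs as [|[w x] wxs IH]; intros HF; unfold Bnd in *; simpl.
 - unfold Rdiv; lra.
 - inversion HF as [|? ? Hx Hxs]; subst. simpl in Hx. pose proof (IH Hxs).
   assert (Rabs w * (h x / eps) <= Rabs w * (B / eps)).
   { apply Rmult_le_compat_l. apply Rabs_pos. unfold Rdiv. apply Rmult_le_compat_r; auto. left; apply Rinv_0_lt_compat; auto. }
   unfold Rdiv in *. nra.
Qed.




Theorem mainTheorem14 (n : nat) (I : (pt -> R) -> Prop) :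
  IsIdeal n I ->
  (exists p, convex_singular n I p) ->
  ~ TH_exact n I.
Proof.
 intros HI [p [Vp [[_ Hnrel] [q [[Hqn Htan] Hrq]]]]] [k Hex].
 set (v := fun i => q i - p i).
 destruct (LA pt (VR n I) (length (allexps k n)) (uu k n) (DD k n p v)) as [wxs [HF Hphi]].
 { intros c Hc.
   pose proof (rep_coeffs k n c) as Hr.
   pose proof (Htan _ _ Hr Hc) as H0.
   pose proof (repD p v n _ (proj1 Hr)) as H1.
   pose proof (HasD_coeffs k n p v c (length (allexps k n))) as H2.
   eapply HasD_ext in H1; [|intros x; symmetry; apply (proj2 Hr)].
   pose proof (HasD_uniq _ _ _ _ _ H1 H2) as H3.
   unfold v in H3. cbv beta in H3. rewrite H0 in H3.
   rewrite (sum_lt_ext _ _ (fun j => c j * DD k n p v j)) by (intros; ring). auto. }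
 destruct (bound_list n (VR n I) q wxs Hrq HF) as [C [HC0 HC]].
 assert (HW : 0 <= sumR (map (fun wx => Rabs (fst wx)) wxs)). { clear. induction wxs; simpl. lra. pose proof (Rabs_pos (fst a)). lra. }
 remember (sumR (map (fun wx => Rabs (fst wx)) wxs)) as W eqn:HWe.
 remember (2 * W * C + 1) as eps eqn:Hepse.
 assert (Heps : 0 < eps) by nra.
 remember (1 + eps * W) as A eqn:HAe.
 assert (HA : 1 <= A) by nra.
 remember (1 / (2 * A)) as t eqn:Hte.
 assert (Ht : 0 < t) by (rewrite Hte; apply Rdiv_lt_0_compat; lra).
 assert (Ht2 : t * (2 * A) = 1) by (rewrite Hte; field; lra).
 set (xt := comb [1 + t; - t] [p; q]).
 assert (THx : TH n k I xt).
 { split.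
   - intros i Hi. unfold xt, comb; simpl. rewrite (proj1 Vp i Hi), Hqn by auto. ring.
   - intros l Hl [gs [HFg HIf]].
     set (S := fun x => sumR (map (fun g => g x ^ 2) gs)).
     assert (HS0 : forall x, 0 <= S x).
     { intros x. unfold S. clear - gs. induction gs; cbn [map sumR]. lra. pose proof (pow2_ge_0 (a x)). lra. }
     assert (HlS : forall y, VR n I y -> l y = S y).
     { intros y Hy. pose proof (proj2 Hy _ HIf) as H. cbv beta in H. unfold S. lra. }
     assert (Hlpos : forall y, VR n I y -> 0 <= l y). { intros y Hy. rewrite HlS; auto. }
     destruct (proj1 HI _ HIf) as [r Hr].
     pose proof (Htan _ _ Hr (fun y Hy => proj2 Hy _ HIf)) as H0.
     pose proof (repD p v n r (proj1 Hr)) as H1.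
     eapply HasD_ext in H1; [|intros x; symmetry; apply (proj2 Hr)].
     unfold v in H1. cbv beta in H1. rewrite H0 in H1.
     assert (Hlin : HasD p v l (l q - l p)).
     { apply HasD_affine with (A := l p). intros s.
       replace (line p v s) with (comb [1 - s; s] [p; q]).
       rewrite (aff_poly2 n) by (auto; ring). ring.
       apply functional_extensionality; intros i. unfold line, comb, v; simpl. gen_pt. ring. }
     destruct (sumsqD n k p v wxs eps gs Heps Hphi HFg) as [d [Hd Hbd]].
     pose proof (HasD_minus _ _ _ _ _ _ Hlin Hd) as H2.
     pose proof (HasD_uniq _ _ _ _ _ H1 H2) as H3.
     assert (HB : Forall (fun wx => S (snd wx) <= C * l q) wxs).
     { pose proof (HC l Hl Hlpos) as H4. rewrite Forall_forall in *. intros wx Hwx.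
       rewrite <- HlS; auto. }
     pose proof (Bnd_bound eps p wxs S (C * l q) Heps HB) as H5.
     rewrite <- HWe in H5. fold S in Hbd. rewrite <- (HlS p Vp) in H5.
     assert (HQ : 0 <= l q) by (apply (conv_nonneg n (VR n I)); auto; apply Hrq).
     assert (HP : 0 <= l p) by auto.
     unfold xt. rewrite (aff_poly2 n) by (auto; ring).
     remember (l p) as P. remember (l q) as Q.
     assert (Hdle : Q - P <= eps * W * P + W * (C * Q) / eps).
     { pose proof (Rle_abs d). lra. }
     assert (Hh : W * (C * Q) / eps <= Q / 2).
     { apply (Rmult_le_reg_r eps); auto. replace (W * (C * Q) / eps * eps) with (W * C * Q) by (field; lra).
       rewrite Hepse. nra. }
     assert (HQP : Q <= 2 * A * P) by nra.
     assert (t * Q <= P) by nra.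
     nra. }
 destruct (Hex xt) as [Hcl _]. specialize (Hcl THx).
 apply Hnrel. apply (seg n (VR n I) xt q p (1 / (1 + t))); auto.
 - apply conv_pt; auto.
 - split. apply Rdiv_lt_0_compat; lra. apply (Rmult_lt_reg_r (1 + t)). lra. replace (1 / (1 + t) * (1 + t)) with 1 by (field; lra). lra.
 - intros i. unfold xt, comb; simpl. gen_pt. field. lra.
Qed.
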